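(* Let $\mathcal{Q}\subseteq\Delta_{N\times M}$ be a nonempty compact convex set consisting only of weakly symmetric channels. Then the robust capacity equals $$\sup_{p\in\Delta_N}\inf_{Q\in\mathcal{Q}}I(p,Q)=\min_{Q\in\mathcal{Q}}\left[\log N+\sum_{m=1}^M Q_{1m}\log\frac{Q_{1m}}{\sum_{l=1}^N Q_{lm}}\right],$$ i.e. the upper bound $\min_{Q\in\mathcal{Q}}\left[\log N+\max_{n}\sum_{m} Q_{nm}\log\frac{Q_{nm}}{\sum_{l} Q_{lm}}\right]$ is attained.
   Context: $\Delta_N$ is the probability simplex in $\mathbb{R}^N$; $\Delta_{N\times M}$ is the set of $N\times M$ nonnegative matrices with each row summing to $1$. $I(p,Q)=\sum_{n,m}p_nQ_{nm}\log\frac{Q_{nm}}{\sum_l p_lQ_{lm}}$, with terms where $p_nQ_{nm}=0$ equal to zero and $0\log 0=0$. A channel $Q\in\Delta_{N\times M}$ is weakly symmetric if every row of $Q$ is a permutation of every other row and all column sums $\sum_{l=1}^N Q_{lm}$, $m=1,\dots,M$, are equal (hence equal to $N/M$). *)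

(* Defs.v *)
From Stdlib Require Import Reals Lra Lia List Permutation.
Open Scope R_scope.

Fixpoint rsum (n : nat) (f : nat -> R) : R :=
  match n with O => 0 | S k => rsum k f + f k end.

(* vectors/matrices are functions on nat; only indices n < N, m < M matter.
   Index 0 plays the role of the paper's index 1. *)
Definition simplex (N : nat) (p : nat -> R) : Prop :=
  (forall n, (n < N)%nat -> 0 <= p n) /\ rsum N p = 1.

Definition channel (N M : nat) (Q : nat -> nat -> R) : Prop :=
  (forall n m, (n < N)%nat -> (m < M)%nat -> 0 <= Q n m) /\
  (forall n, (n < N)%nat -> rsum M (fun m => Q n m) = 1).

Definition colsum (N : nat) (Q : nat -> nat -> R) (m : nat) : R :=
  rsum N (fun l => Q l m).

Definition weakly_symmetric (N M : nat) (Q : nat -> nat -> R) : Prop :=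
  (forall n1 n2, (n1 < N)%nat -> (n2 < N)%nat ->
     Permutation (map (Q n1) (seq 0 M)) (map (Q n2) (seq 0 M))) /\
  (forall m1 m2, (m1 < M)%nat -> (m2 < M)%nat -> colsum N Q m1 = colsum N Q m2).

Definition mutual_info (N M : nat) (p : nat -> R) (Q : nat -> nat -> R) : R :=
  rsum N (fun n => rsum M (fun m =>
    if Req_dec_T (p n * Q n m) 0 then 0
    else p n * Q n m * ln (Q n m / rsum N (fun l => p l * Q l m)))).

Definition sym_bound (N M : nat) (Q : nat -> nat -> R) : R :=
  ln (INR N) + rsum M (fun m =>
    if Req_dec_T (Q 0%nat m) 0 then 0
    else Q 0%nat m * ln (Q 0%nat m / colsum N Q m)).

Definition convex_set (Qs : (nat -> nat -> R) -> Prop) : Prop :=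
  forall Q1 Q2 t, Qs Q1 -> Qs Q2 -> 0 <= t <= 1 ->
    Qs (fun n m => t * Q1 n m + (1 - t) * Q2 n m).

(* compactness in R^{N x M} (finite-dimensional), stated as sequential
   compactness w.r.t. entrywise convergence on the index range *)
Definition compact_set (N M : nat) (Qs : (nat -> nat -> R) -> Prop) : Prop :=
  forall Qk : nat -> nat -> nat -> R, (forall k, Qs (Qk k)) ->
    exists phi : nat -> nat, (forall k, (phi k < phi (S k))%nat) /\
    exists Q, Qs Q /\
      forall n m, (n < N)%nat -> (m < M)%nat ->
        Un_cv (fun k => Qk (phi k) n m) (Q n m).

Definition is_inf (S : R -> Prop) (x : R) : Prop :=
  (forall y, S y -> x <= y) /\ (forall z, (forall y, S y -> z <= y) -> z <= x).

Definition is_sup (S : R -> Prop) (x : R) : Prop :=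
  (forall y, S y -> y <= x) /\ (forall z, (forall y, S y -> y <= z) -> x <= z).

Definition robust_values (N M : nat) (Qs : (nat -> nat -> R) -> Prop) (c : R) : Prop :=
  exists p, simplex N p /\
    is_inf (fun v => exists Q, Qs Q /\ v = mutual_info N M p Q) c.

(* Main.v *)
Require Import Defs.
From Stdlib Require Import Reals List Permutation Lra Lia ClassicalEpsilon Classical.
Open Scope R_scope.


Lemma ln0 : ln 0 = 0.
Proof. unfold ln. destruct (Rlt_dec 0 0) as [h|h]. exfalso; lra. reflexivity. Qed.

Lemma ln_le_sub1 : forall y, 0 < y -> ln y <= y - 1.
Proof. intros y Hy. pose proof (exp_ineq1_le (ln y)). rewrite exp_ln in H; lra. Qed.

Lemma if_mul : forall a b, (if Req_dec_T a 0 then 0 else a * ln b) = a * ln b.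
Proof. intros a b. destruct (Req_dec_T a 0). subst; ring. reflexivity. Qed.

Lemma rsum_ext : forall n f g, (forall i, (i < n)%nat -> f i = g i) -> rsum n f = rsum n g.
Proof. induction n; intros f g H; simpl. reflexivity. rewrite (IHn f g) by (intros; apply H; lia). rewrite H by lia. reflexivity. Qed.

Lemma rsum_le : forall n f g, (forall i, (i < n)%nat -> f i <= g i) -> rsum n f <= rsum n g.
Proof. induction n; intros f g H; simpl. lra. pose proof (IHn f g ltac:(intros; apply H; lia)). pose proof (H n ltac:(lia)). lra. Qed.

Lemma rsum_plus : forall n f g, rsum n (fun i => f i + g i) = rsum n f + rsum n g.
Proof. induction n; intros; simpl. ring. rewrite IHn. ring. Qed.

Lemma rsum_minus : forall n f g, rsum n (fun i => f i - g i) = rsum n f - rsum n g.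
Proof. induction n; intros; simpl. ring. rewrite IHn. ring. Qed.

Lemma rsum_scal : forall n c f, rsum n (fun i => c * f i) = c * rsum n f.
Proof. induction n; intros; simpl. ring. rewrite IHn. ring. Qed.

Lemma rsum_const : forall n c, rsum n (fun _ => c) = INR n * c.
Proof. induction n; intros. - simpl. ring. - change (rsum (S n) (fun _ => c)) with (rsum n (fun _ => c) + c). rewrite IHn, S_INR. ring. Qed.

Lemma rsum_swap : forall n m (f : nat -> nat -> R),
  rsum n (fun i => rsum m (fun j => f i j)) = rsum m (fun j => rsum n (fun i => f i j)).
Proof.
  induction n; intros; simpl.
  - symmetry. transitivity (rsum m (fun _ => 0)). apply rsum_ext; reflexivity. rewrite rsum_const; ring.
  - rewrite IHn. rewrite <- rsum_plus. reflexivity.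
Qed.

Lemma rsum_nonneg : forall n f, (forall i, (i < n)%nat -> 0 <= f i) -> 0 <= rsum n f.
Proof. intros. replace 0 with (rsum n (fun _ => 0)). apply rsum_le; auto.
  rewrite rsum_const; ring. Qed.

Lemma rsum_ge_term : forall n f k, (forall i, (i < n)%nat -> 0 <= f i) -> (k < n)%nat -> f k <= rsum n f.
Proof.
  induction n; intros f k H Hk. lia. simpl.
  destruct (Nat.eq_dec k n). subst. pose proof (rsum_nonneg n f ltac:(intros; apply H; lia)). lra.
  pose proof (IHn f k ltac:(intros; apply H; lia) ltac:(lia)). pose proof (H n ltac:(lia)). lra.
Qed.

Fixpoint lsum (l : list R) : R := match l with nil => 0 | x :: t => x + lsum t end.

Lemma lsum_app : forall l1 l2, lsum (l1 ++ l2) = lsum l1 + lsum l2.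
Proof. induction l1; intros; simpl. ring. rewrite IHl1; ring. Qed.

Lemma lsum_perm : forall l1 l2, Permutation l1 l2 -> lsum l1 = lsum l2.
Proof. intros l1 l2 H; induction H; simpl; lra. Qed.

Lemma rsum_lsum : forall n g, rsum n g = lsum (map g (seq 0 n)).
Proof. induction n; intros; simpl rsum. reflexivity.
  rewrite seq_S, map_app, lsum_app, IHn. simpl. ring. Qed.

Lemma rsum_perm : forall M (r1 r2 : nat -> R) (f : R -> R),
  Permutation (map r1 (seq 0 M)) (map r2 (seq 0 M)) ->
  rsum M (fun m => f (r1 m)) = rsum M (fun m => f (r2 m)).
Proof.
  intros. rewrite !rsum_lsum.
  replace (map (fun m => f (r1 m)) (seq 0 M)) with (map f (map r1 (seq 0 M))) by (rewrite map_map; reflexivity).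
  replace (map (fun m => f (r2 m)) (seq 0 M)) with (map f (map r2 (seq 0 M))) by (rewrite map_map; reflexivity).
  apply lsum_perm, Permutation_map; auto.
Qed.

Definition F (M : nat) (Q : nat -> nat -> R) : R :=
  ln (INR M) + rsum M (fun m => Q 0%nat m * ln (Q 0%nat m)).

Lemma xlog_split : forall x c, 0 <= x -> 0 < c -> x * ln (x / c) = x * ln x - x * ln c.
Proof.
  intros x c Hx Hc. destruct (Req_dec x 0). subst; ring.
  unfold Rdiv. rewrite ln_mult, ln_Rinv by (auto; try apply Rinv_0_lt_compat; lra). ring.
Qed.

Section Q.
Variables (N M : nat) (Q : nat -> nat -> R).
Hypothesis HN : (1 <= N)%nat.
Hypothesis Hch : channel N M Q.
Hypothesis Hws : weakly_symmetric N M Q.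

Lemma M_pos : (1 <= M)%nat.
Proof.
  destruct M eqn:E; [|lia]. destruct Hch as [_ H]. pose proof (H 0%nat ltac:(lia)).
  simpl in H0. lra.
Qed.

Lemma INRM_pos : 0 < INR M.
Proof. apply lt_0_INR. pose proof M_pos. lia. Qed.

Lemma INRN_pos : 0 < INR N.
Proof. apply lt_0_INR. lia. Qed.

Lemma Qnn : forall n m, (n < N)%nat -> (m < M)%nat -> 0 <= Q n m.
Proof. apply Hch. Qed.

Lemma rowsum : forall n, (n < N)%nat -> rsum M (fun m => Q n m) = 1.
Proof. apply Hch. Qed.

Lemma rowperm : forall f n, (n < N)%nat ->
  rsum M (fun m => f (Q n m)) = rsum M (fun m => f (Q 0%nat m)).
Proof. intros. apply rsum_perm. apply Hws; lia. Qed.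

Lemma colsum_val : forall m, (m < M)%nat -> colsum N Q m = INR N / INR M.
Proof.
  intros m Hm.
  assert (H1 : rsum M (fun j => colsum N Q j) = INR N).
  { unfold colsum. rewrite <- rsum_swap.
    rewrite (rsum_ext N _ (fun _ => 1)) by (intros; apply rowsum; auto).
    rewrite rsum_const; ring. }
  rewrite (rsum_ext M _ (fun _ => colsum N Q m)) in H1 by (intros; apply Hws; auto).
  rewrite rsum_const in H1. pose proof INRM_pos. rewrite <- H1. field. lra.
Qed.

Lemma sym_eq : sym_bound N M Q = F M Q.
Proof.
  unfold sym_bound, F. pose proof INRM_pos. pose proof INRN_pos.
  rewrite (rsum_ext M _ (fun m => Q 0%nat m * ln (Q 0%nat m) - ln (INR N / INR M) * Q 0%nat m)).
  2:{ intros i Hi. rewrite if_mul, colsum_val by auto. rewrite xlog_split.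
      ring. apply Qnn; lia. apply Rdiv_lt_0_compat; lra. }
  rewrite rsum_minus, rsum_scal, rowsum by lia.
  unfold Rdiv. rewrite ln_mult, ln_Rinv; try apply Rinv_0_lt_compat; auto. ring.
Qed.

Lemma mi_uniform : mutual_info N M (fun _ => / INR N) Q = F M Q.
Proof.
  unfold mutual_info, F. pose proof INRM_pos. pose proof INRN_pos.
  rewrite (rsum_ext N _ (fun n => / INR N * rsum M (fun m => Q 0%nat m * ln (Q 0%nat m / / INR M)))).
  2:{ intros n Hn. rewrite <- rsum_scal.
      rewrite (rsum_ext M _ (fun m => / INR N * (Q n m * ln (Q n m / / INR M)))).
      - rewrite rsum_scal, (rowperm (fun x => x * ln (x / / INR M))) by auto. rewrite rsum_scal. reflexivity.
      - intros m Hm. rewrite if_mul. rewrite rsum_scal.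
        change (rsum N (fun l => Q l m)) with (colsum N Q m). rewrite colsum_val by auto.
        replace (/ INR N * (INR N / INR M)) with (/ INR M) by (field; lra). ring. }
  rewrite rsum_const.
  rewrite (rsum_ext M _ (fun m => Q 0%nat m * ln (Q 0%nat m) - ln (/ INR M) * Q 0%nat m)).
  2:{ intros i Hi. rewrite xlog_split. ring. apply Qnn; lia. apply Rinv_0_lt_compat; lra. }
  rewrite rsum_minus, rsum_scal, rowsum by lia. rewrite ln_Rinv by lra. field. lra.
Qed.

Lemma pointwise : forall p q r, 0 <= p -> 0 <= q -> p * q <= r ->
  p * q * ln (q / r) - p * q * (ln (INR M) + ln q) <= p * q * / (INR M * r) - p * q.
Proof.
  intros p q r Hp Hq Hr. pose proof INRM_pos.
  destruct (Req_dec (p*q) 0) as [E|E]. rewrite E. lra.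
  assert (0 < p). { destruct Hp; auto. subst. lra. }
  assert (0 < q). { destruct Hq; auto. subst. lra. }
  assert (0 < p * q) by nra.
  assert (0 < r) by lra.
  unfold Rdiv. rewrite ln_mult, ln_Rinv by (try apply Rinv_0_lt_compat; lra).
  pose proof (ln_le_sub1 (/ (INR M * r)) ltac:(apply Rinv_0_lt_compat; nra)).
  rewrite ln_Rinv, ln_mult in H4 by nra.
  assert (p * q * (- (ln (INR M) + ln r)) <= p * q * (/ (INR M * r) - 1)) by (apply Rmult_le_compat_l; lra).
  lra.
Qed.

Lemma mi_bound : forall p, simplex N p -> mutual_info N M p Q <= F M Q.
Proof.
  intros p [Hp Hs]. pose proof INRM_pos.
  set (r := fun m => rsum N (fun l => p l * Q l m)).
  assert (Hr : forall n m, (n < N)%nat -> (m < M)%nat -> p n * Q n m <= r m).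
  { intros n m Hn Hm. unfold r. apply (rsum_ge_term N (fun l => p l * Q l m)); auto.
    intros; apply Rmult_le_pos; [apply Hp | apply Qnn]; auto. }
  assert (HF : F M Q = rsum N (fun n => rsum M (fun m => p n * Q n m * (ln (INR M) + ln (Q n m))))).
  { rewrite (rsum_ext N _ (fun n => F M Q * p n)). rewrite rsum_scal, Hs; ring.
    intros n Hn. rewrite (rsum_ext M _ (fun m => p n * (ln (INR M) * Q n m + Q n m * ln (Q n m)))) by (intros; ring).
    rewrite rsum_scal, rsum_plus, rsum_scal, rowsum by auto. rewrite (rowperm (fun x => x * ln x)) by auto.
    unfold F. ring. }
  assert (HI : mutual_info N M p Q = rsum N (fun n => rsum M (fun m => p n * Q n m * ln (Q n m / r m)))).
  { unfold mutual_info. apply rsum_ext; intros; apply rsum_ext; intros. rewrite if_mul. reflexivity. }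
  assert (H1 : rsum N (fun n => rsum M (fun m => p n * Q n m)) = 1).
  { rewrite (rsum_ext N _ (fun n => p n)). auto. intros n Hn. rewrite rsum_scal, rowsum by auto. ring. }
  assert (H2 : rsum N (fun n => rsum M (fun m => p n * Q n m * / (INR M * r m))) <= 1).
  { rewrite rsum_swap.
    rewrite (rsum_ext M _ (fun m => / (INR M * r m) * r m)).
    2:{ intros m Hm. transitivity (/ (INR M * r m) * rsum N (fun l => p l * Q l m)); [| reflexivity]. rewrite <- rsum_scal. apply rsum_ext; intros; ring. }
    apply Rle_trans with (rsum M (fun _ => / INR M)).
    - apply rsum_le. intros m Hm.
      assert (0 <= r m). { unfold r. apply rsum_nonneg. intros; apply Rmult_le_pos; [apply Hp | apply Qnn]; auto. }
      destruct (Req_dec (r m) 0) as [E|E]. rewrite E, Rmult_0_r. left; apply Rinv_0_lt_compat; lra.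
      right. field. split; lra.
    - rewrite rsum_const. right; field; lra. }
  assert (H3 : mutual_info N M p Q - F M Q <=
     rsum N (fun n => rsum M (fun m => p n * Q n m * / (INR M * r m))) -
     rsum N (fun n => rsum M (fun m => p n * Q n m))).
  { rewrite HI, HF, <- !rsum_minus. apply rsum_le. intros n Hn. rewrite <- !rsum_minus.
    apply rsum_le. intros m Hm. apply pointwise. apply Hp; auto. apply Qnn; auto. apply Hr; auto. }
  lra.
Qed.

End Q.

Lemma cv_const : forall c, Un_cv (fun _ => c) c.
Proof. intros c eps H. exists 0%nat. intros. unfold R_dist. replace (c - c) with 0 by ring.
  rewrite Rabs_R0; auto. Qed.

Lemma xlnx_bounds : forall y, 0 < y -> y < 1 -> - 2 * sqrt y <= y * ln y <= 0.
Proof.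
  intros y H1 H2. set (s := sqrt y).
  assert (Hs : 0 < s) by (apply sqrt_lt_R0; auto).
  assert (Hy : y = s * s) by (symmetry; apply sqrt_sqrt; lra).
  split.
  - assert (ln y = 2 * ln s). { rewrite Hy, ln_mult by auto. ring. }
    pose proof (ln_le_sub1 (/ s) ltac:(apply Rinv_0_lt_compat; auto)).
    rewrite ln_Rinv in H0 by auto.
    assert (2 * s * s * ln s >= 2 * s * s * (1 - / s)).
    { apply Rle_ge, Rmult_le_compat_l. nra. lra. }
    assert (2 * s * s * (1 - / s) = 2 * s * s - 2 * s) by (field; lra).
    rewrite H, Hy. nra.
  - assert (ln y < 0). { rewrite <- ln_1. apply ln_increasing; auto. }
    nra.
Qed.

Lemma xlnx_cv : forall u x, (forall k, 0 <= u k) -> 0 <= x -> Un_cv u x ->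
  Un_cv (fun k => u k * ln (u k)) (x * ln x).
Proof.
  intros u x Hu Hx Hc. destruct Hx as [Hx|Hx].
  - assert (C : continuity_pt (fun y => y * ln y) x).
    { apply (continuity_pt_mult (fun y => y) ln).
      apply derivable_continuous_pt, derivable_pt_id.
      apply derivable_continuous_pt. exists (/ x). apply derivable_pt_lim_ln; auto. }
    apply (continuity_seq (fun y => y * ln y)); auto.
  - subst x. rewrite Rmult_0_l.
    pose proof (continuity_seq sqrt u 0 (continuity_pt_sqrt 0 (Rle_refl 0)) Hc) as Hsq.
    rewrite sqrt_0 in Hsq.
    intros eps He. destruct (Hsq (Rmin 1 (eps/2)) ltac:(apply Rmin_pos; lra)) as [N1 HN1].
    exists N1. intros k Hk. specialize (HN1 k Hk). unfold R_dist in *.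
    rewrite Rminus_0_r in *.
    pose proof (sqrt_pos (u k)). rewrite Rabs_right in HN1 by lra.
    pose proof (Rmin_l 1 (eps/2)). pose proof (Rmin_r 1 (eps/2)).
    destruct (Hu k) as [Hp|Hz].
    + assert (u k < 1).
      { rewrite <- (sqrt_sqrt (u k)) by lra. nra. }
      pose proof (xlnx_bounds (u k) Hp H2).
      rewrite Rabs_left1 by lra. lra.
    + rewrite <- Hz, Rmult_0_l, Rabs_R0. lra.
Qed.

Lemma rsum_cv : forall n (a : nat -> nat -> R) (l : nat -> R),
  (forall i, (i < n)%nat -> Un_cv (fun k => a k i) (l i)) ->
  Un_cv (fun k => rsum n (a k)) (rsum n l).
Proof.
  induction n; intros a l H; simpl.
  - apply cv_const.
  - apply CV_plus. apply IHn; intros; apply H; lia. apply H; lia.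
Qed.

Lemma xlnx_ge : forall x, 0 <= x -> -1 <= x * ln x.
Proof.
  intros x [Hx|Hx]. 2:{ subst. lra. }
  pose proof (ln_le_sub1 (/ x) ltac:(apply Rinv_0_lt_compat; auto)).
  rewrite ln_Rinv in H by auto.
  assert (x * ln x >= x * (1 - / x)) by (apply Rle_ge, Rmult_le_compat_l; lra).
  assert (x * (1 - / x) = x - 1) by (field; lra). lra.
Qed.

Lemma phi_ge : forall phi : nat -> nat, (forall k, (phi k < phi (S k))%nat) -> forall k, (k <= phi k)%nat.
Proof. intros phi H k. induction k. lia. specialize (H k). lia. Qed.

Lemma exists_min : forall N M (Qs : (nat -> nat -> R) -> Prop),
  (1 <= N)%nat -> (exists Q, Qs Q) -> compact_set N M Qs ->
  (forall Q, Qs Q -> forall m, (m < M)%nat -> 0 <= Q 0%nat m) ->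
  exists Qstar, Qs Qstar /\ forall Q, Qs Q -> F M Qstar <= F M Q.
Proof.
  intros N M Qs HN [Q0 HQ0] Hcomp Hnn.
  assert (Hlow : forall Q, Qs Q -> ln (INR M) - INR M <= F M Q).
  { intros Q HQ. unfold F. assert (- INR M <= rsum M (fun m => Q 0%nat m * ln (Q 0%nat m))).
    { replace (- INR M) with (rsum M (fun _ => -1)) by (rewrite rsum_const; ring).
      apply rsum_le. intros; apply xlnx_ge; auto. }
    lra. }
  set (E := fun y => exists Q, Qs Q /\ y = - F M Q).
  assert (Hb : bound E).
  { exists (INR M - ln (INR M)). intros y [Q [HQ ->]]. specialize (Hlow Q HQ). lra. }
  destruct (completeness E Hb (ex_intro _ (- F M Q0) (ex_intro _ Q0 (conj HQ0 eq_refl)))) as [s [Hub Hlub]].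
  assert (Hge : forall Q, Qs Q -> - s <= F M Q).
  { intros Q HQ. assert (- F M Q <= s) by (apply Hub; exists Q; auto). lra. }
  assert (Happ : forall k : nat, exists Q, Qs Q /\ F M Q < - s + / (INR k + 1)).
  { intros k. apply NNPP. intro Hn.
    assert (Hpos : 0 < / (INR k + 1)) by (apply Rinv_0_lt_compat; pose proof (pos_INR k); lra).
    assert (s <= s - / (INR k + 1)).
    { apply Hlub. intros y [Q [HQ ->]].
      destruct (Rle_lt_dec (- s + / (INR k + 1)) (F M Q)). lra.
      exfalso. apply Hn. exists Q; auto. }
    lra. }
  set (Qk := fun k => proj1_sig (constructive_indefinite_description _ (Happ k))).
  assert (HQk : forall k, Qs (Qk k) /\ F M (Qk k) < - s + / (INR k + 1)).
  { intros k. unfold Qk. destruct (constructive_indefinite_description _ (Happ k)); auto. }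
  destruct (Hcomp Qk (fun k => proj1 (HQk k))) as [phi [Hphi [Q [HQ Hconv]]]].
  exists Q. split; auto.
  assert (Hcv : Un_cv (fun k => F M (Qk (phi k))) (F M Q)).
  { unfold F. apply CV_plus. apply cv_const.
    apply (rsum_cv M (fun k m => Qk (phi k) 0%nat m * ln (Qk (phi k) 0%nat m))).
    intros i Hi. apply xlnx_cv.
    - intros k. apply Hnn; auto. apply HQk.
    - apply Hnn; auto.
    - apply Hconv; auto; lia. }
  assert (F M Q <= - s).
  { destruct (Rle_lt_dec (F M Q) (- s)) as [|Hlt]; auto. exfalso.
    set (d := F M Q + s).
    destruct (Hcv (d/2) ltac:(unfold d; lra)) as [N1 HN1].
    destruct (archimed_cor1 (d/2) ltac:(unfold d; lra)) as [K [HK HK0]].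
    set (k := Nat.max N1 K).
    specialize (HN1 k ltac:(unfold k; lia)). unfold R_dist in HN1.
    pose proof (phi_ge phi Hphi k).
    assert (INR K <= INR (phi k) + 1).
    { assert (INR K <= INR (phi k)) by (apply le_INR; unfold k in *; lia). lra. }
    assert (/ (INR (phi k) + 1) <= / INR K) by (apply Rinv_le_contravar; auto; apply lt_0_INR; lia).
    destruct (HQk (phi k)) as [_ Hf].
    apply Rabs_def2 in HN1. unfold d in *. lra. }
  intros Q' HQ'. specialize (Hge Q' HQ'). lra.
Qed.

Theorem proposition3 (N M : nat) (Qs : (nat -> nat -> R) -> Prop) :
  (1 <= N)%nat ->
  (exists Q, Qs Q) ->
  compact_set N M Qs ->
  convex_set Qs ->
  (forall Q, Qs Q -> channel N M Q /\ weakly_symmetric N M Q) ->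
  exists Qstar, Qs Qstar /\
    (forall Q, Qs Q -> sym_bound N M Qstar <= sym_bound N M Q) /\
    is_sup (robust_values N M Qs) (sym_bound N M Qstar).
Proof.
  intros HN Hne Hcomp _ HQs.
  destruct (exists_min N M Qs HN Hne Hcomp) as [Qst [HQst Hmin]].
  { intros Q HQ m Hm. apply (proj1 (proj1 (HQs Q HQ))); auto; lia. }
  destruct (HQs Qst HQst) as [Hc0 Hw0].
  exists Qst. split; auto. split.
  - intros Q HQ. destruct (HQs Q HQ) as [Hc Hw].
    rewrite (sym_eq N M Qst), (sym_eq N M Q); auto.
  - rewrite (sym_eq N M Qst); auto. split.
    + intros c [p [Hp [Hlb _]]]. apply Rle_trans with (mutual_info N M p Qst).
      apply Hlb. exists Qst; auto. apply mi_bound; auto.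
    + intros z Hz. apply Hz. exists (fun _ => / INR N).
      assert (HNp : 0 < INR N) by (apply lt_0_INR; lia).
      split.
      * split. intros; left; apply Rinv_0_lt_compat; auto.
        rewrite rsum_const. field. lra.
      * split.
        -- intros y [Q [HQ ->]]. destruct (HQs Q HQ) as [Hc Hw].
           rewrite mi_uniform; auto.
        -- intros w Hw'. rewrite <- (mi_uniform N M Qst); auto. apply Hw'. exists Qst; auto.
Qed.
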